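(* Let $A,B\in\mathbb{C}^{n\times n}$. The following are equivalent: (i) $A\leq^{GD1}B$; (ii) $A =AA^-B=BA^{GD}A$ for some $A^- \in A\{1\}$ and some $A^{GD} \in A\{GD\}$; (iii) $A = AA^{GD1}B=BA^{GD1}A$ for some GD1 inverse $A^{GD1}$ of $A$; (iv) for some $A^- \in A\{1\}$ and some $A^{GD} \in A\{GD\}$ there exist idempotents $P,Q\in\mathbb{C}^{n\times n}$ such that $R(P)=R(A)$, $N(P)=N(AA^-)$, $R(Q)=R(A^{GD}A)$, $N(Q)=N(A)$ and $A=PB=BQ$; (v) for some GD1 inverse $A^{GD1}$ of $A$ there exist idempotents $P,Q\in\mathbb{C}^{n\times n}$ such that $R(P)=R(A)$, $N(P)=N(A^{GD1})$, $R(Q)=R(A^{GD1})$, $N(Q)=N(A)$ and $A=PB=BQ$.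
   Context: For $A\in\mathbb{C}^{n\times n}$, $ind(A)$ is the smallest nonnegative integer $k$ with $\mathrm{rank}(A^k)=\mathrm{rank}(A^{k+1})$. $A\{1\}$ is the set of matrices $X$ with $AXA=A$. With $k=ind(A)$, $A\{GD\}$ is the set of matrices $X$ with $AXA=A$, $XA^{k+1}=A^k$, $A^{k+1}X=A^k$ (G-Drazin inverses). A GD1 inverse of $A$ is a matrix $A^{GD1}=A^{GD}AA^-$ with $A^-\in A\{1\}$, $A^{GD}\in A\{GD\}$. We write $A\leq^{GD1}B$ if $AA^{GD1}=BA^{GD1}$ and $A^{GD1}A=A^{GD1}B$ for some GD1 inverse $A^{GD1}$ of $A$. $R(\cdot)$, $N(\cdot)$ denote range and null space. *)

(* Defs.v *)
From HB Require Import structures.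
From mathcomp Require Import all_boot all_order all_algebra.
From mathcomp Require Import complex.
From mathcomp Require Import Rstruct.
Set Implicit Arguments. Unset Strict Implicit. Unset Printing Implicit Defensive.
Import Order.TTheory GRing.Theory Num.Theory.
Local Open Scope ring_scope.

Notation C := (complex Rdefinitions.R).

Section GD.
Variable n : nat.
Implicit Types A B X P : 'M[C]_n.

Definition range A : 'cV[C]_n -> Prop := fun y => exists x, y = A *m x.
Definition nullsp A : 'cV[C]_n -> Prop := fun x => A *m x = 0.
Definition same_set (S T : 'cV[C]_n -> Prop) : Prop := forall v, S v <-> T v.

Definition is_index A (k : nat) : Prop :=
  \rank (A ^+ k) = \rank (A ^+ k.+1) /\
  (forall j, (j < k)%N -> \rank (A ^+ j) <> \rank (A ^+ j.+1)).

Definition inner_inv A X : Prop := A *m X *m A = A.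

Definition GD_inv A X : Prop :=
  exists k, is_index A k /\
    A *m X *m A = A /\ X *m A ^+ k.+1 = A ^+ k /\ A ^+ k.+1 *m X = A ^+ k.

Definition GD1_inv A X : Prop :=
  exists G M, GD_inv A G /\ inner_inv A M /\ X = G *m A *m M.

Definition GD1_le A B : Prop :=
  exists X, GD1_inv A X /\ A *m X = B *m X /\ X *m A = X *m B.

Definition idem_mx P : Prop := P *m P = P.
End GD.

(* Main.v *)
Require Import Defs.
From HB Require Import structures.
From mathcomp Require Import all_boot all_order all_algebra.
From mathcomp Require Import complex Rstruct.
Import Order.TTheory GRing.Theory Num.Theory.
Local Open Scope ring_scope.
Set Implicit Arguments.

Section Aux.
Variable n : nat.
Implicit Types A B X P Q E F H G M : 'M[C]_n.

Lemma mx_ext F H : (forall x : 'cV[C]_n, F *m x = H *m x) -> F = H.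
Proof.
move=> h; apply/matrixP=> i j.
have := h (delta_mx j 0); rewrite -!colE => /colP /(_ i).
by rewrite !mxE.
Qed.

Lemma idem_uniq P E : idem_mx P -> idem_mx E ->
  (forall v, range E v -> range P v) -> (forall v, nullsp E v -> nullsp P v) ->
  P = E.
Proof.
move=> hP hE hr hn; apply: mx_ext => x.
have h1 : nullsp E (x - E *m x) by rewrite /nullsp mulmxBr mulmxA hE subrr.
have := hn _ h1; rewrite /nullsp mulmxBr => /eqP; rewrite subr_eq0 => /eqP ->.
have [y ->] := hr (E *m x) (ex_intro _ x erefl).
by rewrite mulmxA hP.
Qed.

Definition C5 A B X := exists P Q : 'M[C]_n, idem_mx P /\ idem_mx Q /\
           same_set (range P) (range A) /\ same_set (nullsp P) (nullsp X) /\
           same_set (range Q) (range X) /\ same_set (nullsp Q) (nullsp A) /\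
           A = P *m B /\ A = B *m Q.

Section Refl.
Variables A X : 'M[C]_n.
Hypothesis h1 : A *m X *m A = A.
Hypothesis h2 : X *m A *m X = X.

Lemma rAX v : range (A *m X) v <-> range A v.
Proof.
split=> [[x ->]|[x ->]]; first by exists (X *m x); rewrite mulmxA.
by exists (A *m x); rewrite !mulmxA h1.
Qed.

Lemma nAX v : nullsp (A *m X) v <-> nullsp X v.
Proof.
rewrite /nullsp; split=> h.
  by rewrite -h2 -!mulmxA (mulmxA A) h mulmx0.
by rewrite -mulmxA h mulmx0.
Qed.

Lemma rXA v : range (X *m A) v <-> range X v.
Proof.
split=> [[x ->]|[x ->]]; first by exists (A *m x); rewrite mulmxA.
by exists (X *m x); rewrite !mulmxA h2.
Qed.

Lemma nXA v : nullsp (X *m A) v <-> nullsp A v.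
Proof.
rewrite /nullsp; split=> h.
  by rewrite -h1 -!mulmxA (mulmxA X) h mulmx0.
by rewrite -mulmxA h mulmx0.
Qed.

Lemma idAX : idem_mx (A *m X).
Proof. by rewrite /idem_mx mulmxA h1. Qed.
Lemma idXA : idem_mx (X *m A).
Proof. by rewrite /idem_mx mulmxA h2. Qed.

Lemma L5 B : C5 A B X <-> (A = A *m X *m B /\ A = B *m X *m A).
Proof.
split.
  move=> [P [Q [iP [iQ [rP [nP [rQ [nQ [eP eQ]]]]]]]]].
  have eP' : P = A *m X.
    apply: idem_uniq => // [|v|v].
    - exact: idAX.
    - by move/rAX/rP.
    - by move/nAX/nP.
  have eQ' : Q = X *m A.
    apply: idem_uniq => // [|v|v].
    - exact: idXA.
    - by move/rXA/rQ.
    - by move/nXA/nQ.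
  by rewrite eP' in eP; rewrite eQ' mulmxA in eQ.
move=> [e1 e2]; exists (A *m X), (X *m A).
split; first exact: idAX.
split; first exact: idXA.
split; first exact: rAX.
split; first exact: nAX.
split; first exact: rXA.
split; first exact: nXA.
by rewrite -mulmxA in e2.
Qed.

Lemma L1 B : (A *m X = B *m X /\ X *m A = X *m B) <->
   (A = A *m X *m B /\ A = B *m X *m A).
Proof.
split=> [[e1 e2]|[e1 e2]].
  split.
    by rewrite -{1}h1 -mulmxA e2 mulmxA.
  by rewrite -{1}h1 e1.
split.
  by rewrite {1}e2 -!mulmxA (mulmxA X) h2.
by rewrite {1}e1 !mulmxA h2.
Qed.

End Refl.

Section GM.
Variables A G M : 'M[C]_n.
Hypothesis hG : A *m G *m A = A.
Hypothesis hM : A *m M *m A = A.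

Lemma eAX : A *m (G *m A *m M) = A *m M.
Proof. by rewrite !mulmxA hG. Qed.
Lemma eXA : (G *m A *m M) *m A = G *m A.
Proof. by rewrite -!mulmxA (mulmxA A) hM. Qed.
Lemma eAXA : A *m (G *m A *m M) *m A = A.
Proof. by rewrite eAX. Qed.
Lemma eXAX : (G *m A *m M) *m A *m (G *m A *m M) = G *m A *m M.
Proof. by rewrite eXA -!mulmxA (mulmxA A G) (mulmxA (A *m G)) hG. Qed.
End GM.

End Aux.

Lemma GD_AGA n (A G : 'M[C]_n) : GD_inv A G -> A *m G *m A = A.
Proof. by case=> k [_ [h _]]. Qed.

Unset Implicit Arguments.
Theorem theorem2p15 (n : nat) (A B : 'M[C]_n) :
  [<-> GD1_le A B;
       exists M G, inner_inv A M /\ GD_inv A G /\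
         A = A *m M *m B /\ A = B *m G *m A;
       exists X, GD1_inv A X /\ A = A *m X *m B /\ A = B *m X *m A;
       exists M G, inner_inv A M /\ GD_inv A G /\
         exists P Q : 'M[C]_n, idem_mx P /\ idem_mx Q /\
           same_set (range P) (range A) /\ same_set (nullsp P) (nullsp (A *m M)) /\
           same_set (range Q) (range (G *m A)) /\ same_set (nullsp Q) (nullsp A) /\
           A = P *m B /\ A = B *m Q;
       exists X, GD1_inv A X /\
         exists P Q : 'M[C]_n, idem_mx P /\ idem_mx Q /\
           same_set (range P) (range A) /\ same_set (nullsp P) (nullsp X) /\
           same_set (range Q) (range X) /\ same_set (nullsp Q) (nullsp A) /\
           A = P *m B /\ A = B *m Q].
Proof.
tfae.
- move=> [X [[G [M [hG [hM ->]]]] e]].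
  have hG' := GD_AGA hG.
  move/(L1 (eAXA hG' hM) (eXAX hG' hM)): e => [e1 e2].
  rewrite eAX // in e1; rewrite -mulmxA eXA // mulmxA in e2.
  by exists M, G.
- move=> [M [G [hM [hG [e1 e2]]]]].
  have hG' := GD_AGA hG.
  exists (G *m A *m M); split; first by exists G, M.
  rewrite eAX // -(mulmxA B) eXA // mulmxA; by split.
- move=> [X [[G [M [hG [hM ->]]]] e]].
  have hG' := GD_AGA hG.
  exists M, G; do 2! split => //.
  move/(L5 (eAXA hG' hM) (eXAX hG' hM)): e.
  move=> [P [Q [iP [iQ [rP [nP [rQ [nQ [eP eQ]]]]]]]]].
  exists P, Q; do 2! split=> //; split=> //.
  split.
    move=> v; apply: (iff_trans (nP v)); rewrite -(@eAX _ A G M hG').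
    apply: iff_sym; exact: (nAX (eXAX hG' hM) v).
  split; last by [].
  move=> v; apply: (iff_trans (rQ v)).
  have := rXA (eXAX hG' hM) v; rewrite (@eXA _ A G M hM) => h.
  by apply: iff_sym.
- move=> [M [G [hM [hG [P [Q [iP [iQ [rP [nP [rQ [nQ [eP eQ]]]]]]]]]]]]].
  have hG' := GD_AGA hG.
  exists (G *m A *m M); split; first by exists G, M.
  exists P, Q; do 2! split=> //; split=> //.
  split.
    move=> v; apply: (iff_trans (nP v)); rewrite -(@eAX _ A G M hG').
    exact: (nAX (eXAX hG' hM) v).
  split; last by [].
  move=> v; apply: (iff_trans (rQ v)).
  by have := rXA (eXAX hG' hM) v; rewrite (@eXA _ A G M hM).
- move=> [X [hX c]].
  have [G [M [hG [hM eX]]]] := hX.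
  have hG' := GD_AGA hG.
  have h1 : A *m X *m A = A by rewrite eX eAXA.
  have h2 : X *m A *m X = X by rewrite eX eXAX.
  exists X; split => //; apply/(L1 h1 h2); exact/(L5 h1 h2).
Qed.
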